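(* Let $X$ be a separable metrizable space such that $C_p(X)$ is countable dense homogeneous. Then $X$ is a $\gamma$-set.
   Context: $C_p(X)$ is the space of continuous functions $X\to\mathbb{R}$ with the pointwise convergence topology. A space $Y$ is countable dense homogeneous if it is separable and for any two countable dense $D,E\subseteq Y$ there is a homeomorphism $h\colon Y\to Y$ with $h[D]=E$. An open cover $\mathcal{U}$ of $X$ is an $\omega$-cover if $X\notin\mathcal{U}$ and every finite subset of $X$ is contained in some member of $\mathcal{U}$; a countable open cover $\{U_n\}$ is a $\gamma$-cover if it is infinite and each point of $X$ lies in all but finitely many $U_n$. $X$ is a $\gamma$-set if every open $\omega$-cover of $X$ contains a $\gamma$-cover as a subfamily. *)

(* Defs.v *)
From HB Require Import structures.
From mathcomp Require Import all_boot all_order all_algebra.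
From mathcomp Require Import all_classical all_reals.
From mathcomp Require Import topology normedtype.
From mathcomp Require Import Rstruct Rstruct_topology.
Set Implicit Arguments. Unset Strict Implicit. Unset Printing Implicit Defensive.
Import Order.TTheory GRing.Theory Num.Theory.
Local Open Scope classical_set_scope.
Local Open Scope ring_scope.

Notation R := Rdefinitions.R.

Definition metrizable (X : topologicalType) : Prop :=
  exists d : X -> X -> R,
    [/\ (forall x y, 0 <= d x y),
        (forall x y, d x y = 0 <-> x = y),
        (forall x y, d x y = d y x),
        (forall x y z, d x z <= d x y + d y z) &
        (forall A : set X, open A <->
           (forall x, A x -> exists2 e : R, 0 < e & [set y | d x y < e] `<=` A))].

Definition separable (X : topologicalType) : Prop :=
  exists D : set X, countable D /\ dense D.

Definition Cp (X : topologicalType) : set (X -> R) :=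
  [set f | continuous f].
Arguments Cp X : clear implicits.

(* Open subsets of C_p(X) for the topology of pointwise convergence
   (the subspace topology of the product R^X): U is open iff around each
   f in U some basic neighbourhood {g in C(X) | |g x - f x| < e, x in F},
   F finite, e > 0, is contained in U. *)
Definition Cp_open (X : topologicalType) (U : set (X -> R)) : Prop :=
  U `<=` Cp X /\
  forall f, U f -> exists F : seq X, exists2 e : R, 0 < e &
    forall g, Cp X g -> (forall x, x \in F -> `|g x - f x| < e) -> U g.

Definition Cp_dense (X : topologicalType) (D : set (X -> R)) : Prop :=
  D `<=` Cp X /\
  forall U, Cp_open U -> U !=set0 -> U `&` D !=set0.
Arguments Cp_dense X D : clear implicits.

Definition Cp_continuous (X : topologicalType) (h : (X -> R) -> (X -> R)) : Prop :=
  forall U, Cp_open U -> Cp_open ([set f | Cp X f /\ U (h f)]).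

Definition Cp_homeomorphism (X : topologicalType) (h : (X -> R) -> (X -> R)) : Prop :=
  (forall f, Cp X f -> Cp X (h f)) /\
  exists k : (X -> R) -> (X -> R),
    [/\ (forall f, Cp X f -> Cp X (k f)),
        (forall f, Cp X f -> k (h f) = f),
        (forall f, Cp X f -> h (k f) = f),
        Cp_continuous h & Cp_continuous k].
Arguments Cp_homeomorphism X h : clear implicits.

Definition Cp_separable (X : topologicalType) : Prop :=
  exists D, countable D /\ Cp_dense X D.

Definition Cp_CDH (X : topologicalType) : Prop :=
  Cp_separable X /\
  forall D E : set (X -> R), countable D -> Cp_dense X D ->
    countable E -> Cp_dense X E ->
    exists2 h, Cp_homeomorphism X h & h @` D = E.

Definition open_cover (X : topologicalType) (U : set (set X)) : Prop :=
  (forall A, U A -> open A) /\ (forall x, exists2 A, U A & A x).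

Definition omega_cover (X : topologicalType) (U : set (set X)) : Prop :=
  open_cover U /\ ~ U setT /\
  forall F : seq X, exists2 A, U A & forall x, x \in F -> A x.

(* a gamma-cover, given by an injective enumeration u of an infinite
   countable family: every point lies in all but finitely many u n *)
Definition gamma_sequence (X : topologicalType) (u : nat -> set X) : Prop :=
  injective u /\ (forall n, open (u n)) /\
  forall x : X, exists N, forall n, (N <= n)%N -> u n x.

Definition gamma_set (X : topologicalType) : Prop :=
  forall U : set (set X), omega_cover U ->
    exists u : nat -> set X, (forall n, U (u n)) /\ gamma_sequence u.

(* Main.v *)
Require Import Defs.
From mathcomp Require Import all_boot all_order all_algebra.
From mathcomp Require Import all_classical all_reals topology.
From mathcomp Require Import normedtype Rstruct Rstruct_topology ring lra.
Set Implicit Arguments. Unset Strict Implicit.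
Import Order.TTheory GRing.Theory Num.Theory.
Local Open Scope classical_set_scope.
Local Open Scope ring_scope.

Definition isMetric (X : topologicalType) (d : X -> X -> R) : Prop :=
    [/\ (forall x y, 0 <= d x y),
        (forall x y, d x y = 0 <-> x = y),
        (forall x y, d x y = d y x),
        (forall x y z, d x z <= d x y + d y z) &
        (forall A : set X, open A <->
           (forall x, A x -> exists2 e : R, 0 < e & [set y | d x y < e] `<=` A))].

Lemma m_ball_open (X : topologicalType) (d : X -> X -> R) :
  isMetric d -> forall x e, open [set y | d x y < e].
Proof.
move=> [d0 dxx dsym dtri dop] x e; apply/dop => y /= Hy.
exists (e - d x y); first by rewrite subr_gt0.
move=> z /= Hz; have := dtri x y z; lra.
Qed.

Lemma m_cont_dist (X : topologicalType) (d : X -> X -> R) :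
  isMetric d -> forall q, continuous (fun y => d y q).
Proof.
move=> dm q x; have [d0 dxx dsym dtri dop] := dm.
rewrite /prop_for /continuous_at; apply/(@cvgrPdist_lt _ R^o) => e e0.
apply: (filterS _ (open_nbhs_nbhs (conj (m_ball_open dm x e) _))); last first.
  by rewrite /= (proj2 (dxx x x) erefl).
move=> y /= Hy; rewrite ltr_norml; apply/andP; split.
  have := dtri y x q; rewrite (dsym y x); lra.
have := dtri x y q; lra.
Qed.

Definition psi (X : topologicalType) (d : X -> X -> R) (q : nat -> X)
  (L : seq (nat * nat)) (x : X) : R :=
  foldr (fun p acc => Num.min ((p.2.+1)%:R * d x (q p.1) - 1) acc) 1 L.

Lemma psi_cont (X : topologicalType) (d : X -> X -> R) q L :
  isMetric d -> continuous (psi d q L).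
Proof.
move=> dm; elim: L => [|p L IH] /=.
  by move=> x; exact: cst_continuous.
move=> x.
have -> : psi d q (p :: L) = (fun y => (p.2.+1)%:R * d y (q p.1) - 1) \min (psi d q L) by [].
apply: continuous_min; last exact: IH.
apply: continuousB; last exact: cst_continuous.
apply: continuousM; first exact: cst_continuous.
exact: m_cont_dist.
Qed.

Definition phi (X : topologicalType) (d : X -> X -> R) (q : nat -> X)
  (L : seq (nat * nat)) (g : X -> R) (x : X) : R :=
  g x + Num.max 0 (psi d q L x) * (`|g x| + 1).

Lemma phi_cont (X : topologicalType) (d : X -> X -> R) q L g :
  isMetric d -> continuous g -> continuous (phi d q L g).
Proof.
move=> dm gc x.
have -> : phi d q L g = g + ((cst 0) \max (psi d q L)) * ((Num.norm \o g) + cst 1) by [].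
apply: (@continuousD R R^o X); first exact: gc.
apply: (@continuousM R X).
  apply: continuous_max; first exact: cst_continuous.
  exact: psi_cont.
apply: (@continuousD R R^o X); last exact: cst_continuous.
apply: continuous_comp; first exact: gc.
exact: (@norm_continuous R R^o).
Qed.

Lemma psi_le0 (X : topologicalType) (d : X -> X -> R) q L x :
  (exists2 p, p \in L & (p.2.+1)%:R * d x (q p.1) < 1) -> psi d q L x <= 0.
Proof.
elim: L => [[p]|p0 L IH [p]]; first by rewrite in_nil.
rewrite in_cons => /orP[/eqP -> Hp|pL Hp] /=; rewrite ge_min; apply/orP.
  by left; lra.
by right; apply: IH; exists p.
Qed.

Lemma psi_ge1 (X : topologicalType) (d : X -> X -> R) q L x :
  (forall p, p \in L -> 2 <= (p.2.+1)%:R * d x (q p.1)) -> 1 <= psi d q L x.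
Proof.
elim: L => [//|p0 L IH] H /=; rewrite le_min; apply/andP; split.
  have := H p0 (mem_head _ _); lra.
by apply: IH => p pL; apply: H; rewrite in_cons pL orbT.
Qed.

Lemma phi_eq (X : topologicalType) (d : X -> X -> R) q L g x :
  psi d q L x <= 0 -> phi d q L g x = g x.
Proof. by move=> H; rewrite /phi max_l // mul0r addr0. Qed.

Lemma phi_ge1 (X : topologicalType) (d : X -> X -> R) q L g x :
  1 <= psi d q L x -> 1 <= phi d q L g x.
Proof.
move=> H; rewrite /phi max_r; last lra.
have : `|g x| <= `|g x| by [].
rewrite ler_norml => /andP[h1 _].
have h2 := normr_ge0 (g x).
nra.
Qed.

Lemma cover_lemma (X : topologicalType) (d : X -> X -> R) (q : nat -> X) :
  isMetric d -> (forall x (m : nat), exists n, (m.+1)%:R * d x (q n) < 1) ->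
  forall (U : set X), open U -> forall F : seq X, (forall x, x \in F -> U x) ->
  exists L : seq (nat * nat),
    (forall p, p \in L -> forall y, (p.2.+1)%:R * d y (q p.1) < 2 -> U y) /\
    (forall x, x \in F -> exists2 p, p \in L & (p.2.+1)%:R * d x (q p.1) < 1).
Proof.
move=> dm qd U Uo; have [d0 dxx dsym dtri dop] := dm.
elim=> [_|x F IH HF]; first by exists [::]; split=> [p|y]; rewrite in_nil.
have [L [L1 L2]] : exists L : seq (nat * nat),
    (forall p, p \in L -> forall y, (p.2.+1)%:R * d y (q p.1) < 2 -> U y) /\
    (forall x, x \in F -> exists2 p, p \in L & (p.2.+1)%:R * d x (q p.1) < 1).
  by apply: IH => y yF; apply: HF; rewrite in_cons yF orbT.
have [eps eps0 Heps] := (proj1 (dop U) Uo) x (HF x (mem_head _ _)).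
set m := Num.truncn (3 / eps).
have Hm : 3 / eps < (m.+1)%:R by exact: truncnS_gt.
rewrite ltr_pdivrMr // in Hm.
have [j Hj] := qd x m.
exists ((j, m) :: L); split.
  move=> p; rewrite in_cons => /orP[/eqP -> y /= Hy|pL]; last exact: L1.
  apply: Heps => /=.
  have := dtri x (q j) y; rewrite (dsym (q j) y).
  have := d0 x (q j); have := d0 y (q j).
  have M0 : 0 < (m.+1)%:R :> R by rewrite ltr0n.
  move: Hj Hy Hm M0; set M := (m.+1)%:R; set a := d x (q j); set b := d y (q j).
  move=> *; nra.
move=> y; rewrite in_cons => /orP[/eqP ->|yF].
  by exists (j, m); rewrite ?mem_head.
have [p pL Hp] := L2 y yF; exists p => //; by rewrite in_cons pL orbT.
Qed.

Lemma Cp_open_basic (X : topologicalType) (f0 : X -> R) (F : seq X) (e : R) :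
  Cp_open [set g | Cp X g /\ exists2 del, 0 < del &
                    forall x, x \in F -> `|g x - f0 x| < e - del].
Proof.
split; first by move=> g [].
move=> g [gc [del del0 H]]; exists F, (del / 2); first by rewrite divr_gt0.
move=> h hc Hh; split => //; exists (del / 2); first by rewrite divr_gt0.
move=> x xF; have := H x xF; have := Hh x xF.
have := ler_distD (g x) (h x) (f0 x); lra.
Qed.

Fixpoint sig (M : nat -> nat) (k : nat) : nat :=
  match k with 0 => 0 | k'.+1 => maxn (M (sig M k')) (sig M k').+1 end.

Lemma sig_lt M k : (sig M k < sig M k.+1)%N.
Proof. by rewrite /= leq_max leqnn orbT. Qed.

Lemma sig_mono M k k' : (k <= k')%N -> (sig M k <= sig M k')%N.
Proof.
elim: k' => [|k' IH]; first by rewrite leqn0 => /eqP ->.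
rewrite leq_eqVlt => /orP[/eqP -> //|]; rewrite ltnS => /IH H.
exact: (leq_trans H (ltnW (sig_lt M k'))).
Qed.

Lemma sig_ge M k : (k <= sig M k)%N.
Proof. by elim: k => [//|k IH]; apply: leq_ltn_trans IH (sig_lt M k). Qed.

Lemma gamma_extract (X : topologicalType) (UU : set (set X)) (w : nat -> set X) :
  ~ UU setT -> (forall n, UU (w n)) -> (forall n, open (w n)) ->
  (forall x, exists N, forall n, (N <= n)%N -> w n x) ->
  exists u, (forall n, UU (u n)) /\ gamma_sequence u.
Proof.
move=> nT Uw wo wg.
have A : forall j, exists N, forall m, (N <= m)%N -> w m <> w j.
  move=> j; have [x nx] : exists x, ~ w j x.
    apply: contrapT => H; apply: nT.
    have -> : (setT : set X) = w j.
      by apply/seteqP; split=> // y _; apply: contrapT => ny; apply: H; exists y.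
    exact: Uw.
  have [N HN] := wg x; exists N => m /HN wm E; apply: nx; by rewrite -E.
have B : forall n, exists N, forall m, (N <= m)%N -> forall j, (j <= n)%N -> w m <> w j.
  elim=> [|n [N1 H1]].
    have [N HN] := A 0%N; exists N => m Hm j; rewrite leqn0 => /eqP ->; exact: HN.
  have [N2 H2] := A n.+1; exists (maxn N1 N2) => m; rewrite geq_max => /andP[m1 m2] j.
  rewrite leq_eqVlt => /orP[/eqP ->|]; first exact: H2.
  rewrite ltnS; exact: H1.
have [M HM] := choice B.
exists (fun k => w (sig M k)); split; first by move=> n; exact: Uw.
split; last split.
- have key : forall a b, (a < b)%N -> w (sig M b) <> w (sig M a).
    move=> a [//|b'] ab; apply: (HM (sig M b')).
      by rewrite /= leq_max leqnn.
    by apply: sig_mono; rewrite -ltnS.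
  move=> a b E; case: (ltngtP a b) => // ab.
    by have := key a b ab; rewrite E.
  by have := key b a ab; rewrite E.
- by move=> n; exact: wo.
- move=> x; have [N HN] := wg x; exists N => n Hn; apply: HN.
  exact: leq_trans Hn (sig_ge M n).
Qed.

Theorem mainTheorem17 (X : topologicalType) :
  separable X -> metrizable X -> Cp_CDH X -> gamma_set X.
Proof.
move=> [Q [Qc Qd]] [d dm0] [[S [Sc [SCp Sd]]] cdh] UU [[Uop Ucov] [nT Hfin]].
have dm : isMetric d := dm0.
have [d0 dxx dsym dtri dop] := dm.
have [[x0 _]|noX] := pselect (exists x : X, True); last first.
  exfalso; have [A UA _] := Hfin [::]; apply: nT.
  have -> : (setT : set X) = A.
    by apply/seteqP; split=> // y _; exfalso; apply: noX; exists y.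
  exact: UA.
have [gq gqs] : exists gq : nat -> option X, set_surj setT (some @` Q) gq.
  by apply/surjPex; apply/ocard_geP.
pose q n := odflt x0 (gq n).
have qd : forall x (m : nat), exists n, (m.+1)%:R * d x (q n) < 1.
  move=> x m.
  have M0 : 0 < (m.+1)%:R :> R by rewrite ltr0n.
  have ne : [set y | d x y < (m.+1)%:R^-1] !=set0.
    by exists x => /=; rewrite (proj2 (dxx x x) erefl) invr_gt0.
  have [y [By Qy]] := Qd _ ne (m_ball_open dm x _).
  have [n _ Hn] := gqs (Some y) (ex_intro2 _ _ y Qy erefl).
  exists n; rewrite /q Hn /=.
  move: By => /=; rewrite -(ltr_pM2l M0) mulfV ?gt_eqF //.
have [gs gss] : exists gs : nat -> option (X -> R), set_surj setT (some @` S) gs.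
  by apply/surjPex; apply/ocard_geP.
pose sf n := odflt (fun _ : X => 0 : R) (gs n).
have sfS : forall g, S g -> exists n, sf n = g.
  move=> g Sg; have [n _ Hn] := gss (Some g) (ex_intro2 _ _ g Sg erefl).
  by exists n; rewrite /sf Hn.
pose valid (L : seq (nat * nat)) := exists U, UU U /\ (forall p, p \in L -> forall y, (p.2.+1)%:R * d y (q p.1) < 2 -> U y).
have HU : forall L, exists U : set X, valid L -> UU U /\ (forall p, p \in L -> forall y, (p.2.+1)%:R * d y (q p.1) < 2 -> U y).
  move=> L; have [[U HU]|nv] := pselect (valid L).
    by exists U.
  by exists setT.
have [UL HUL] := choice HU.
pose z := (fun _ : X => 0 : R).
pose Phi L g := if `[< valid L >] then phi d q L g else z.
pose D := [set f | f = z \/ exists L g, S g /\ f = Phi L g].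
pose E := [set f | exists g (m n : nat), S g /\ f = (fun x => g x + m%:R / (n.+1)%:R)].
have zc : Cp X z by move=> x; exact: cst_continuous.
have DCp : D `<=` Cp X.
  move=> f [->|[L [g [Sg ->]]]] //; rewrite /Phi; case: asboolP => // _.
  exact: phi_cont (SCp _ Sg).
have ECp : E `<=` Cp X.
  move=> f [g [m [n [Sg ->]]]] x.
  apply: (@continuousD R R^o X); first exact: (SCp _ Sg).
  exact: cst_continuous.
have Dc : countable D.
  pose fD (o : option (seq (nat * nat) * nat)) :=
    if o is Some (L, n) then Phi L (sf n) else z.
  apply: (sub_countable _ (sub_countable (card_image_le fD setT) (countableP _))).
  apply: subset_card_le => f [->|[L [g [Sg ->]]]]; first by exists None.
  by have [n <-] := sfS g Sg; exists (Some (L, n)).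
have Ec : countable E.
  pose fE (o : nat * nat * nat) := (fun x => sf o.1.1 x + o.1.2%:R / (o.2.+1)%:R).
  apply: (sub_countable _ (sub_countable (card_image_le fE setT) (countableP _))).
  apply: subset_card_le => f [g [m [n [Sg ->]]]].
  by have [k <-] := sfS g Sg; exists (k, m, n).
have Dd : Cp_dense X D.
  split=> // U [Usub Uo] [f0 Uf0].
  have [F [e e0 HUe]] := Uo f0 Uf0.
  have f0c : Cp X f0 := Usub f0 Uf0.
  have Vf0 : [set g | Cp X g /\ exists2 del, 0 < del &
                    forall x, x \in F -> `|g x - f0 x| < e - del] f0.
    split => //; exists (e / 2); first by rewrite divr_gt0.
    by move=> x _; rewrite subrr normr0; lra.
  have [s [[sc [del del0 Hs]] Ss]] := Sd _ (Cp_open_basic f0 F e) (ex_intro _ f0 Vf0).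
  have [A UA FA] := Hfin F.
  have [L [L1 L2]] := cover_lemma dm qd (Uop A UA) FA.
  have vL : valid L by exists A.
  exists (phi d q L s); split; last first.
    by right; exists L, s; split => //; rewrite /Phi; case: asboolP.
  apply: HUe; first exact: phi_cont.
  move=> x xF; rewrite phi_eq; last exact: psi_le0 (L2 x xF).
  have := Hs x xF; lra.
have Ed : Cp_dense X E.
  split=> // U Uo Une; have [f [Uf Sf]] := Sd U Uo Une.
  exists f; split => //; exists f, 0%N, 0%N; split => //.
  by apply: funext => x; rewrite mul0r addr0.
have [h [hCp [k [kCp kh hk hc kc]]] hDE] := cdh D E Dc Dd Ec Ed.
have [g0 [m0 [n0 [Sg0 Hh0]]]] : E (h z) by rewrite -hDE; exists z => //; left.
pose en (n : nat) := fun x => h z x + (n.+1)%:R^-1.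
have enE : forall n, E (en n).
  move=> n; exists g0, (m0 * n.+1 + n0.+1)%N, (n0 * n.+1 + n)%N; split => //.
  apply: funext => x; rewrite /en Hh0 /=.
  have -> : (n0 * n.+1 + n).+1 = (n0.+1 * n.+1)%N by rewrite mulSn addSn addnC.
  rewrite natrD !natrM; field.
  by rewrite !nat1r !pnatr_eq0.
have Hex : forall n, exists f, D f /\ h f = en n.
  by move=> n; have := enE n; rewrite -hDE => -[f Df hf]; exists f.
have [dk Hdk] := choice Hex.
have dkz : forall n, dk n <> z.
  move=> n E0; have [_ H] := Hdk n; rewrite E0 in H.
  have := congr1 (fun f => f x0) H; rewrite /en /= => H1.
  rewrite -{1}(addr0 (h z x0)) in H1; move/addrI: H1 => /eqP.
  by rewrite eq_sym invr_eq0 pnatr_eq0.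
have HL : forall n, exists L, valid L /\ exists g, S g /\ dk n = phi d q L g.
  move=> n; have [[E0|[L [g [Sg Eg]]]] _] := Hdk n; first by exfalso; exact: (dkz n).
  move: Eg; rewrite /Phi; case: asboolP => [v Eg|_ Eg]; last by exfalso; exact: (dkz n).
  by exists L; split => //; exists g.
have [Lk HLk] := choice HL.
apply: (gamma_extract (w := fun n => UL (Lk n)) nT).
- by move=> n; exact: (HUL _ (HLk n).1).1.
- by move=> n; apply: Uop; exact: (HUL _ (HLk n).1).1.
move=> x.
have Po := kc _ (Cp_open_basic z [:: x] 1).
have hzc : Cp X (h z) := hCp z zc.
have Phz : Cp X (h z) /\ [set g | Cp X g /\ exists2 del, 0 < del &
                    forall y, y \in [:: x] -> `|g y - z y| < 1 - del] (k (h z)).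
  rewrite kh //; split => //; split => //; exists (1 / 2); first by rewrite divr_gt0.
  by move=> y _; rewrite /z subrr normr0; lra.
have [F [del del0 HP]] := Po.2 (h z) Phz.
exists (Num.truncn (del^-1)) => n Kn.
have Hinv : (n.+1)%:R^-1 < del.
  have H1 : del^-1 < (n.+1)%:R.
    apply: (lt_le_trans (truncnS_gt _)); rewrite ler_nat; exact: Kn.
  by rewrite -div1r ltr_pdivrMr ?ltr0Sn // mulrC -ltr_pdivrMr // div1r.
have Hclose : forall y, y \in F -> `|en n y - h z y| < del.
  move=> y _; rewrite /en addrAC subrr add0r ger0_norm ?invr_ge0 ?ler0n //.
have [_ [_ [del' del'0 Hd]]] := HP (en n) (ECp _ (enE n)) Hclose.
have [Ddk hdk] := Hdk n; rewrite -hdk kh in Hd; last exact: DCp.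
have := Hd x (mem_head _ _); rewrite /z subr0 ltr_norml => /andP[_ Hlt].
apply: contrapT => nx.
have [v [g [Sg Eg]]] := HLk n.
have : 1 <= phi d q (Lk n) g x.
  apply: phi_ge1; apply: psi_ge1 => p pL; rewrite leNgt; apply/negP => Hp.
  by apply: nx; exact: (HUL _ v).2 p pL x Hp.
rewrite -Eg; lra.
Qed.
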